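(* Let $\kappa$ be an infinite cardinal and let $(\mathcal U_\xi)_{\xi\in\kappa}$ be a family of non-principal ultrafilters on $\kappa$. Then there exists $X\subseteq\kappa$ with $|X|=\kappa$ such that $X\notin\mathcal U_\xi$ for every $\xi\in X$. *)

(* Defs.v *)
From HB Require Import structures.
From mathcomp Require Import all_boot.
From mathcomp Require Import boolp classical_sets functions cardinality.
Set Implicit Arguments. Unset Strict Implicit. Unset Printing Implicit Defensive.
Local Open Scope classical_set_scope.

Definition is_ultrafilter {T : Type} (U : set (set T)) : Prop :=
  [/\ U setT,
      ~ U set0,
      (forall A B : set T, U A -> U B -> U (A `&` B)),
      (forall A B : set T, A `<=` B -> U A -> U B)
    & (forall A : set T, U A \/ U (~` A))].

(* Non-principal: no singleton belongs to U (for an ultrafilter this is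
   equivalent to not being generated by a point). *)
Definition is_nonprincipal_ultrafilter {T : Type} (U : set (set T)) : Prop :=
  is_ultrafilter U /\ (forall x : T, ~ U [set x]).

(* Main.v *)
Require Import Defs.
From HB Require Import structures.
From mathcomp Require Import all_boot.
From mathcomp Require Import boolp classical_sets functions cardinality.
Local Open Scope classical_set_scope.

Definition injon {T U : Type} (X : set T) (f : T -> U) :=
  forall x y, X x -> X y -> f x = f y -> x = y.

Lemma chain2 (S : Type) (F : set (set S)) : total_on F subset ->
  forall a b, (\bigcup_(G in F) G) a -> (\bigcup_(G in F) G) b ->
  exists G, F G /\ G a /\ G b.
Proof.
move=> tot a b [G1 F1 G1a] [G2 F2 G2b].
have [s12|s21] := tot _ _ F1 F2.
- by exists G2; split => //; split => //; apply: s12.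
- by exists G1; split => //; split => //; apply: s21.
Qed.

Arguments chain2 {S F}.

Definition graph_fun {A B : Type} (b0 : B) (M : set (A * B)) (x : A) : B :=
  match pselect (exists y, M (x, y)) with
  | left H => projT1 (cid H)
  | right _ => b0 end.

Lemma graph_funP {A B : Type} (b0 : B) (M : set (A * B)) x :
  (exists y, M (x, y)) -> M (x, graph_fun b0 M x).
Proof.
rewrite /graph_fun; case: pselect => // H _; exact: (projT2 (cid H)).
Qed.


Section Hess.
Variables (T : Type) (e : nat -> T).
Hypothesis einj : injective e.

Definition DG (G : set ((T * T) * T)) (x : T) := exists z, G ((x, x), z).

Definition PG (G : set ((T * T) * T)) : Prop :=
 [/\ (forall p z z', G (p, z) -> G (p, z') -> z = z'),
     (forall p p' z, G (p, z) -> G (p', z) -> p = p'),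
     (forall x y, (exists z, G ((x, y), z)) <-> DG G x /\ DG G y),
     (forall p z, G (p, z) -> DG G z) &
     ((exists q, G q) -> forall i, DG G (e i))].

Lemma DG_sub G H x : G `<=` H -> DG G x -> DG H x.
Proof. by move=> GH [z Gz]; exists z; apply: GH. Qed.

Lemma chain2' (S : Type) (F : set (set S)) : total_on F subset ->
  forall a b, (\bigcup_(G in F) G) a -> (\bigcup_(G in F) G) b ->
  exists G, F G /\ G a /\ G b.
Proof.
move=> tot a b [G1 F1 G1a] [G2 F2 G2b].
have [s12|s21] := tot _ _ F1 F2.
- by exists G2; split => //; split => //; apply: s12.
- by exists G1; split => //; split => //; apply: s21.
Qed.

Arguments chain2' {S F}.

Lemma PG_chain (F : set (set ((T * T) * T))) : F `<=` PG -> total_on F subset ->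
  PG (\bigcup_(G in F) G).
Proof.
move=> FP tot; set H := \bigcup_(G in F) G.
have sub G : F G -> G `<=` H by move=> FG q Gq; exists G.
split.
- move=> p z z' H1 H2; have [G [FG [G1 G2]]] := chain2' tot _ _ H1 H2.
  by have [h _ _ _ _] := FP _ FG; exact: h G1 G2.
- move=> p p' z H1 H2; have [G [FG [G1 G2]]] := chain2' tot _ _ H1 H2.
  by have [_ h _ _ _] := FP _ FG; exact: h G1 G2.
- move=> x y; split.
    move=> [z [G FG Gz]]; have [_ _ h _ _] := FP _ FG.
    have [Dx Dy] : DG G x /\ DG G y by apply/h; exists z.
    by split; apply: DG_sub (sub _ FG) _.
  move=> [[z1 H1] [z2 H2]]; have [G [FG [G1 G2]]] := chain2' tot _ _ H1 H2.
  have [_ _ h _ _] := FP _ FG.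
  have [z Gz] : exists z, G ((x, y), z) by apply/h; split; [exists z1|exists z2].
  by exists z; apply: sub FG _ _.
- move=> p z [G FG Gz]; have [_ _ _ h _] := FP _ FG.
  exact: DG_sub (sub _ FG) (h _ _ Gz).
- move=> [q [G FG Gq]] i; have [_ _ _ _ h] := FP _ FG.
  exact: DG_sub (sub _ FG) (h (ex_intro _ q Gq) i).
Qed.

Lemma PG0 (pr : nat * nat -> nat) : injective pr ->
  PG [set q | exists i j, q = ((e i, e j), e (pr (i, j)))].
Proof.
move=> prinj; set G0 := [set q | _].
have DG0 x : DG G0 x <-> exists i, x = e i.
  split; first by move=> [z [i [j E]]]; case: E => -> _ _; exists i.
  by move=> [i ->]; exists (e (pr (i, i))); exists i, i.
split.
- move=> p z z' [i [j E1]] [i' [j' E2]]; case: E1 => E1 E1'; subst.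
  by case: E2 => /einj -> /einj -> ->.
- move=> p p' z [i [j E1]] [i' [j' E2]]; case: E1 => E1 E1'; subst.
  by case: E2 => -> /einj /prinj [-> ->].
- move=> x y; split.
    move=> [z [i [j E]]]; case: E => -> -> _.
    by split; apply/DG0; [exists i|exists j].
  move=> [/DG0 [i Ei] /DG0 [j Ej]]; rewrite Ei Ej.
  by exists (e (pr (i, j))); exists i, j.
- by move=> p z [i [j E]]; case: E => _ ->; apply/DG0; eexists.
- by move=> _ i; apply/DG0; exists i.
Qed.

Variable M : set ((T * T) * T).
Hypothesis PM : PG M.
Hypothesis Mne : exists q, M q.

Definition fM := graph_fun (e 0) M.

Lemma fP x y : DG M x -> DG M y -> M ((x, y), fM (x, y)).
Proof.
move=> Dx Dy; apply: graph_funP; have [_ _ h _ _] := PM; exact: (proj2 (h x y) (conj Dx Dy)).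
Qed.

Arguments fP {x y}.

Lemma fA x y : DG M x -> DG M y -> DG M (fM (x, y)).
Proof. move=> Dx Dy; have [_ _ _ h _] := PM; exact: h (fP Dx Dy). Qed.

Arguments fA {x y}.

Lemma finj x y x' y' : DG M x -> DG M y -> DG M x' -> DG M y' ->
  fM (x, y) = fM (x', y') -> x = x' /\ y = y'.
Proof.
move=> Dx Dy Dx' Dy' E; have [_ h _ _ _] := PM.
have := fP Dx' Dy'; rewrite -E => H.
by have [-> ->] := h _ _ _ (fP Dx Dy) H.
Qed.

Arguments finj {x y x' y'}.

Lemma eA i : DG M (e i).
Proof. by have [_ _ _ _ h] := PM; exact: h. Qed.

Lemma Mdom p z : M (p, z) -> DG M p.1 /\ DG M p.2.
Proof. by case: p => x y Mp; have [_ _ h _ _] := PM; apply/h; exists z. Qed.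

Arguments Mdom {p z}.

Lemma ext (h : T -> T) : injon (DG M) h -> (forall x, DG M x -> ~ DG M (h x)) ->
  exists B, M `<` B /\ PG B.
Proof.
move=> hinj hout.
set A := DG M.
pose ap (b : bool) x := if b then h x else x.
pose pos (i : nat) x y := (ap (i != 0) x, ap (i != 1) y).
pose val (i : nat) x y := h (fM (fM (x, y), e i)).
pose N := [set q | exists i x y, (i < 3)%N /\ A x /\ A y /\ q = (pos i x y, val i x y)].
pose E z := A z \/ exists a, A a /\ z = h a.
have valA i x y : A x -> A y -> A (fM (fM (x, y), e i)).
  by move=> Ax Ay; apply: fA; [apply: fA|apply: eA].
have apE b x : A x -> E (ap b x).
  by case: b => Ax; [right; exists x|left].
have apA b x : A x -> A (ap b x) -> b = false.
  by case: b => // Ax /(hout _ Ax).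
have posnA i x y : A x -> A y -> ~ (A (pos i x y).1 /\ A (pos i x y).2).
  move=> Ax Ay [/(apA _ _ Ax) e1 /(apA _ _ Ay) e2].
  by move: e1 e2; case: i => [|[|i]].
have ap_inj b b' x x' : A x -> A x' -> ap b x = ap b' x' -> b = b' /\ x = x'.
  case: b; case: b' => /= Ax Ax' E1.
  - by split => //; apply: hinj.
  - by exfalso; apply: (hout _ Ax); rewrite E1.
  - by exfalso; apply: (hout _ Ax'); rewrite -E1.
  - by [].
have pos_inj i i' x y x' y' : (i < 3)%N -> (i' < 3)%N -> A x -> A y -> A x' -> A y' ->
    pos i x y = pos i' x' y' -> [/\ i = i', x = x' & y = y'].
  move=> i3 i3' Ax Ay Ax' Ay' [/(ap_inj _ _ _ _ Ax Ax') [b1 ->]].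
  move=> /(ap_inj _ _ _ _ Ay Ay') [b2 ->]; split => //.
  by move: i3 i3' b1 b2; case: i => [|[|[|i]]]; case: i' => [|[|[|i']]].
have val_inj i i' x y x' y' : (i < 3)%N -> (i' < 3)%N -> A x -> A y -> A x' -> A y' ->
    val i x y = val i' x' y' -> [/\ i = i', x = x' & y = y'].
  move=> i3 i3' Ax Ay Ax' Ay' /(hinj _ _ (valA _ _ _ Ax Ay) (valA _ _ _ Ax' Ay')).
  move=> /(finj (fA Ax Ay) (eA i) (fA Ax' Ay') (eA i')) [].
  by move=> /(finj Ax Ay Ax' Ay') [-> ->] /einj ->.
have valnA i x y : A x -> A y -> ~ A (val i x y).
  by move=> Ax Ay; apply: hout; apply: valA.
set B := M `|` N.
have DB z : DG B z <-> E z.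
  split.
    move=> [w [Mw|[i [x [y [i3 [Ax [Ay Ew]]]]]]]].
      by left; exists w.
    move: Ew; rewrite /pos => -[-> _ _]; exact: apE.
  move=> [Az|[a [Aa ->]]].
    by apply: DG_sub Az; apply: subsetUl.
  exists (val 2 a a); right; exists 2, a, a; split => //.
have Mdom' x y z : M ((x, y), z) -> A x /\ A y by move/Mdom.
exists B; split.
  split; first exact: subsetUl.
  have Ne : N ((pos 0 (e 0) (e 0)), val 0 (e 0) (e 0)).
    by exists 0, (e 0), (e 0); split => //; split; [apply: eA|split; [apply: eA|]].
  move=> /(_ _ (or_intror Ne)) /Mdom [D1 D2].
  exact: (posnA 0 (e 0) (e 0) (eA 0) (eA 0)).
split.
- move=> p z z' [Mz|[i [x [y [i3 [Ax [Ay Ez]]]]]]] [Mz'|[i' [x' [y' [i3' [Ax' [Ay' Ez']]]]]]].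
  + by have [h1 _ _ _ _] := PM; exact: h1 Mz Mz'.
  + exfalso; case: Ez' => Ep _; subst p.
    by have [D1 D2] := Mdom Mz; exact: (posnA _ _ _ Ax' Ay' (conj D1 D2)).
  + exfalso; case: Ez => Ep _; subst p.
    by have [D1 D2] := Mdom Mz'; exact: (posnA _ _ _ Ax Ay (conj D1 D2)).
  + case: Ez => Ep ->; case: Ez' => Ep' ->.
    rewrite Ep in Ep'.
    by have [-> -> ->] := pos_inj _ _ _ _ _ _ i3 i3' Ax Ay Ax' Ay' Ep'.
- move=> p p' z [Mz|[i [x [y [i3 [Ax [Ay Ez]]]]]]] [Mz'|[i' [x' [y' [i3' [Ax' [Ay' Ez']]]]]]].
  + by have [_ h1 _ _ _] := PM; exact: h1 Mz Mz'.
  + exfalso; case: Ez' => _ Ev; subst z.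
    by have [_ _ _ h1 _] := PM; apply: (valnA _ _ _ Ax' Ay'); exact: h1 Mz.
  + exfalso; case: Ez => _ Ev; subst z.
    by have [_ _ _ h1 _] := PM; apply: (valnA _ _ _ Ax Ay); exact: h1 Mz'.
  + case: Ez => -> Ev; case: Ez' => -> Ev'.
    rewrite Ev in Ev'.
    by have [-> -> ->] := val_inj _ _ _ _ _ _ i3 i3' Ax Ay Ax' Ay' Ev'.
- move=> x y; rewrite !DB; split.
    move=> [z [Mz|[i [a [b [i3 [Aa [Ab Ez]]]]]]]].
      by have [] := Mdom' _ _ _ Mz; split; left.
    move: Ez; rewrite /pos => -[-> -> _].
    by split; apply: apE.
  move=> [[Ax|[a [Aa ->]]] [Ay|[b [Ab ->]]]].
  + by exists (fM (x, y)); left; apply: fP.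
  + by exists (val 0 x b); right; exists 0, x, b.
  + by exists (val 1 a y); right; exists 1, a, y.
  + by exists (val 2 a b); right; exists 2, a, b.
- move=> p z [Mz|[i [x [y [i3 [Ax [Ay Ez]]]]]]]; apply/DB.
    by left; have [_ _ _ h1 _] := PM; exact: h1 Mz.
  by case: Ez => _ ->; right; exists (fM (fM (x, y), e i)); split => //; apply: valA.
- by move=> _ i; apply/DB; left; apply: eA.
Qed.

End Hess.
Arguments PG {T}. Arguments DG {T}. Arguments fM {T}.
Arguments PG_chain {T e F}. Arguments PG0 {T e} _ {pr}.
Arguments ext {T e} _ {M} _ _ {h} _ _.
Arguments fA {T e M} _ {x y}. Arguments finj {T e M} _ {x y x' y'}.
Arguments eA {T e M} _ _ i.

Lemma pair_nat_inj : exists pr : nat * nat -> nat, injective pr.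
Proof.
have /card_eqPle [H _] := card_nat2.
have /pcard_injP [f fi] := H.
by exists f => a b; apply: fi; rewrite inE.
Qed.

Lemma compare (T : Type) (t0 : T) (X Y : set T) :
  (exists f : T -> T, injon X f /\ (forall x, X x -> Y (f x))) \/
  (exists f : T -> T, injon Y f /\ (forall y, Y y -> X (f y))).
Proof.
pose P (G : set (T * T)) :=
  [/\ (forall x y y', G (x, y) -> G (x, y') -> y = y'),
      (forall x x' y, G (x, y) -> G (x', y) -> x = x') &
      (forall x y, G (x, y) -> X x /\ Y y)].
have [M [[Mf Mi Mxy] Mmax]] : exists M, P M /\ forall B, M `<` B -> ~ P B.
  apply: Zorn_bigcup => F FP tot; split.
  - move=> x y y' H1 H2; have [G [FG [G1 G2]]] := chain2 tot _ _ H1 H2.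
    by have [h _ _] := FP _ FG; exact: h G1 G2.
  - move=> x x' y H1 H2; have [G [FG [G1 G2]]] := chain2 tot _ _ H1 H2.
    by have [_ h _] := FP _ FG; exact: h G1 G2.
  - move=> x y [G FG Gxy]; have [_ _ h] := FP _ FG; exact: h.
have [HX|HX] := pselect (forall x, X x -> exists y, M (x, y)).
  left; exists (graph_fun t0 M); split.
    move=> x y Xx Xy e; apply: (Mi _ _ (graph_fun t0 M x)).
      exact: graph_funP _ _ _ (HX _ Xx).
    by rewrite e; exact: graph_funP _ _ _ (HX _ Xy).
  by move=> x Xx; have [] := Mxy _ _ (graph_funP t0 _ _ (HX _ Xx)).
have [HY|HY] := pselect (forall y, Y y -> exists x, M (x, y)).
  pose M' := [set p : T * T | M (p.2, p.1)].
  right; exists (graph_fun t0 M'); split.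
    move=> x y Xx Xy e.
    have H1 : M' (x, graph_fun t0 M' x) by apply: graph_funP; exact: HY.
    have H2 : M' (y, graph_fun t0 M' y) by apply: graph_funP; exact: HY.
    rewrite -e in H2; exact: (Mf _ _ _ H1 H2).
  move=> x Xx.
  have H1 : M' (x, graph_fun t0 M' x) by apply: graph_funP; exact: HY.
  by have [] := Mxy _ _ H1.
exfalso.
move/existsNP: HX => [x /not_implyP [Xx /forallNP Hx]].
move/existsNP: HY => [y /not_implyP [Yy /forallNP Hy]].
apply: (Mmax (M `|` [set (x, y)])).
  split; first exact: subsetUl.
  by move=> /(_ (x, y) (or_intror erefl)); apply: Hx.
split.
- move=> a b b' H1 H2.
  case: H1 => [H1|H1]; case: H2 => [H2|H2].
  + exact: Mf H1 H2.
  + case: H2 => e1 e2; subst; exfalso; exact: (Hx b).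
  + case: H1 => e1 e2; subst; exfalso; exact: (Hx b').
  + by case: H1 => e1 e2; case: H2 => e3 e4; subst.
- move=> a a' b H1 H2.
  case: H1 => [H1|H1]; case: H2 => [H2|H2].
  + exact: Mi H1 H2.
  + case: H2 => e1 e2; subst; exfalso; exact: (Hy a).
  + case: H1 => e1 e2; subst; exfalso; exact: (Hy a').
  + by case: H1 => e1 e2; case: H2 => e3 e4; subst.
- move=> a b [H|H]; first exact: Mxy.
  by case: H => e1 e2; subst.
Qed.

Lemma sq_inj (T : Type) (e : nat -> T) (einj : injective e) :
  exists g : T * T -> T, injective g.
Proof.
have [pr prinj] := pair_nat_inj.
have [M [PM Mmax]] : exists M, PG e M /\ forall B, M `<` B -> ~ PG e B.
  by apply: Zorn_bigcup => F FP tot; apply: PG_chain.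
have Mne : exists q, M q.
  apply: contrapT => Me.
  apply: (Mmax _ _ (PG0 einj prinj)); split.
    by move=> q Mq; exfalso; apply: Me; exists q.
  move=> /(_ ((e 0, e 0), e (pr (0, 0)))) H.
  by apply: Me; eexists; apply: H; exists 0, 0.
set A := DG M.
have noh : forall h, injon A h -> (forall x, A x -> ~ A (h x)) -> False.
  move=> h hi ho; have [B [MB PB]] := ext einj PM Mne hi ho.
  exact: Mmax MB PB.
have [[h [hi ho]]|[j [ji jo]]] := compare _ (e 0) A (~` A).
  by exfalso; exact: (noh h hi ho).
pose m x := if pselect (A x) then fM e M (x, e 0) else fM e M (j x, e 1).
have mA x : A (m x).
  rewrite /m; case: pselect => Ax; apply: fA => //; try apply: eA => //.
  exact: jo.
have minj : injective m.
  move=> x y; rewrite /m; case: pselect => Ax; case: pselect => Ay.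
  - by move/(finj PM Ax (eA PM Mne 0) Ay (eA PM Mne 0)) => [].
  - move/(finj PM Ax (eA PM Mne 0) (jo _ Ay) (eA PM Mne 1)) => [_ /einj] //.
  - move/(finj PM (jo _ Ax) (eA PM Mne 1) Ay (eA PM Mne 0)) => [_ /einj] //.
  - by move/(finj PM (jo _ Ax) (eA PM Mne 1) (jo _ Ay) (eA PM Mne 1)) => [/ji ->].
exists (fun p => fM e M (m p.1, m p.2)) => [[x y] [x' y']] /=.
by move/(finj PM (mA x) (mA y) (mA x') (mA y')) => [/minj -> /minj ->].
Qed.

Local Open Scope card_scope.

Lemma nat_inj (T : Type) : infinite_set [set: T] -> exists e : nat -> T, injective e.
Proof.
elim/Ppointed: T => T.
  by move=> hinf; exfalso; apply: hinf; rewrite (empty_eq0 setT); exact: finite_set0.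
by move=> /infiniteP /pcard_injP [e ei]; exists e => a b; apply: ei; rewrite inE.
Qed.

Theorem theorem3 (T : Type) (hinf : infinite_set [set: T])
    (U : T -> set (set T))
    (hU : forall xi : T, is_nonprincipal_ultrafilter (U xi)) :
  exists X : set T, X #= [set: T] /\ (forall xi : T, X xi -> ~ U xi X).
Proof.
have [e einj] := nat_inj _ hinf.
have [g ginj] := sq_inj _ _ einj.
pose Y a := [set g (a, b) | b in [set: T]].
have upw xi A B : A `<=` B -> U xi A -> U xi B.
  by have [[_ _ _ h _] _] := hU xi; exact: h.
have capI xi A B : U xi A -> U xi B -> U xi (A `&` B).
  by have [[_ _ h _ _] _] := hU xi; exact: h.
have np xi x : ~ U xi [set x] by have [_ h] := hU xi; exact: h.
have [[a Ha]|Hall] := pselect (exists a, forall xi, Y a xi -> ~ U xi (Y a)).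
  exists (Y a); split => //.
  apply: inj_card_eq => x y _ _ /ginj [->] //.
have H2 : forall a, exists xi, Y a xi /\ U xi (Y a).
  move=> a; apply: contrapT => Hn; apply: Hall; exists a => xi Yxi Uxi.
  by apply: Hn; exists xi.
have [b Hb] := choice H2.
have bY a : Y a (b a) by have [] := Hb a.
have Yuniq a a' z : Y a z -> Y a' z -> a = a'.
  by move=> [c _ <-] [c' _] /ginj [].
exists (b @` [set: T]); split.
  apply: inj_card_eq => x y _ _ E.
  by apply: (Yuniq _ _ (b x)) => //; rewrite E.
move=> _ [a _ <-] UX.
have [_ UY] := Hb a.
apply: (np (b a) (b a)); apply: (upw _ _ _ _ (capI _ _ _ UX UY)).
move=> z [[a' _ <-] Ya']; have -> // : a' = a.
exact: Yuniq (bY a') Ya'.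
Qed.
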